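(* Let $f:\mathbb{R}^n\to(-\infty,+\infty]$ be proper, lower semicontinuous and prox-bounded with threshold $\lambda_f>0$, let $0<\lambda<\lambda_f$, and suppose $\operatorname{dom}f$ is convex. Then the following are equivalent: (a) $\partial_p^\lambda f(x)\ne\varnothing$ for every $x\in\operatorname{dom}f$; (b) $P_\lambda f=\operatorname{conv}(P_\lambda f)$ and $\operatorname{dom}[\partial\operatorname{conv}(f+\lambda^{-1}j)]=\operatorname{dom}f$; (c) $P_\lambda f$ is maximally monotone and $\operatorname{dom}[\partial\operatorname{conv}(f+\lambda^{-1}j)]=\operatorname{dom}f$; (d) $f+\lambda^{-1}j$ is convex and $\operatorname{dom}\partial f=\operatorname{dom}f$; (e) $\partial_p^\lambda f=\partial f$ and $\operatorname{dom}\partial f=\operatorname{dom}f$.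
   Context: $j:=\frac12\|\cdot\|^2$. $P_\lambda f(x):=\operatorname{argmin}_y\{f(y)+\frac1{2\lambda}\|y-x\|^2\}$ (set-valued); $\operatorname{conv}(P_\lambda f)$ is the set-valued map $x\mapsto\operatorname{conv}(P_\lambda f(x))$. Prox-bounded with threshold $\lambda_f=\sup\{\lambda>0:\inf_y\{f(y)+\frac1{2\lambda}\|y-x\|^2\}>-\infty\text{ for some }x\}$. $v\in\partial_p^\lambda f(x)$ iff $x\in\operatorname{dom}f$ and $f(y)\ge f(x)+\langle v,y-x\rangle-\frac1{2\lambda}\|y-x\|^2$ for all $y$. $\operatorname{conv}g$ is the convex hull of a function $g$; $\partial$ is the limiting subdifferential. *)

(* Defs.v *)
(* R^n is represented by row vectors 'rV[R]_n with the EUCLIDEAN inner product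
   defined below (not the library's sup-norm). *)
From HB Require Import structures.
From mathcomp Require Import all_boot all_order all_algebra.
From mathcomp Require Import boolp classical_sets reals constructive_ereal ereal.
Set Implicit Arguments. Unset Strict Implicit. Unset Printing Implicit Defensive.
Import Order.TTheory GRing.Theory Num.Theory.
Local Open Scope classical_set_scope.
Local Open Scope ring_scope.

Section Defs.
Variables (R : realType) (n : nat).
Notation V := 'rV[R]_n.

Definition dotp (u v : V) : R := \sum_(i < n) u 0 i * v 0 i.
Definition sqn (u : V) : R := dotp u u.
Definition enorm (u : V) : R := Num.sqrt (sqn u).
Definition jfun (u : V) : R := sqn u / 2.

Definition dom (f : V -> \bar R) : set V := [set x | (f x < +oo)%E].

Definition proper_fun (f : V -> \bar R) : Prop :=
  (forall x, f x != -oo%E) /\ (exists x, (f x < +oo)%E).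

Definition lsc (f : V -> \bar R) : Prop :=
  forall (x : V) (a : R), (a%:E < f x)%E ->
    exists2 d : R, 0 < d & forall y, enorm (y - x) < d -> (a%:E < f y)%E.

Definition pen (lam : R) (x y : V) : R := sqn (y - x) / (2 * lam).

Definition moreau (f : V -> \bar R) (lam : R) (x : V) : \bar R :=
  ereal_inf [set (f y + (pen lam x y)%:E)%E | y in [set: V]].

Definition prox_set (f : V -> \bar R) : set R :=
  [set lam | 0 < lam /\ exists x, (-oo < moreau f lam x)%E].

Definition prox_bounded (f : V -> \bar R) : Prop := exists lam, prox_set f lam.

Definition prox_threshold (f : V -> \bar R) : \bar R :=
  ereal_sup [set lam%:E | lam in prox_set f].

Definition prox (f : V -> \bar R) (lam : R) (x : V) : set V :=
  [set y | forall z, (f y + (pen lam x y)%:E <= f z + (pen lam x z)%:E)%E].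

Definition convcomb (m : nat) (w : 'I_m -> R) (p : 'I_m -> V) (x : V) : Prop :=
  (forall i, 0 <= w i) /\ \sum_(i < m) w i = 1 /\ x = \sum_(i < m) w i *: p i.

Definition conv_set (S : set V) : set V :=
  [set x | exists m (w : 'I_m -> R) (p : 'I_m -> V),
             convcomb w p x /\ forall i, S (p i)].

Definition convex_set (S : set V) : Prop :=
  forall x y (t : R), S x -> S y -> 0 <= t <= 1 -> S (t *: x + (1 - t) *: y).

Definition convex_fun (g : V -> \bar R) : Prop :=
  forall x y (t : R), dom g x -> dom g y -> 0 <= t <= 1 ->
    (g (t *: x + (1 - t) *: y)%R <= t%:E * g x + (1 - t)%R%:E * g y)%E.

(* convex hull of a function: conv g (x) = inf { sum_i w_i g(x_i) : x = sum_i w_i x_i,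
   convex combination } (Rockafellar, Thm 5.3) *)
Definition conv_fun (g : V -> \bar R) (x : V) : \bar R :=
  ereal_inf [set r | exists m (w : 'I_m -> R) (p : 'I_m -> V),
     convcomb w p x /\ r = (\sum_(i < m) (w i)%:E * g (p i))%E].

Definition prox_subdiff (f : V -> \bar R) (lam : R) (x : V) : set V :=
  [set v | dom f x /\ forall y,
     (f x + (dotp v (y - x) - pen lam x y)%:E <= f y)%E].

Definition frechet_subdiff (f : V -> \bar R) (x : V) : set V :=
  [set v | f x \is a fin_num /\
     forall eps : R, 0 < eps -> exists2 d : R, 0 < d & forall y, enorm (y - x) < d ->
       ((fine (f x) + dotp v (y - x) - eps * enorm (y - x))%:E <= f y)%E].

Definition vcvg (u : nat -> V) (x : V) : Prop :=
  forall eps : R, 0 < eps -> exists N, forall k, (N <= k)%N -> enorm (u k - x) < eps.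
Definition rcvg (u : nat -> R) (a : R) : Prop :=
  forall eps : R, 0 < eps -> exists N, forall k, (N <= k)%N -> `|u k - a| < eps.

Definition lim_subdiff (f : V -> \bar R) (x : V) : set V :=
  [set v | f x \is a fin_num /\
     exists (xs : nat -> V) (vs : nat -> V),
       vcvg xs x /\ rcvg (fun k => fine (f (xs k))) (fine (f x)) /\
       (forall k, frechet_subdiff f (xs k) (vs k)) /\ vcvg vs v].

Definition sdom (T : V -> set V) : set V := [set x | exists v, T x v].

Definition monotone_op (T : V -> set V) : Prop :=
  forall x y u v, T x u -> T y v -> 0 <= dotp (u - v) (x - y).
Definition max_monotone (T : V -> set V) : Prop :=
  monotone_op T /\
  forall T' : V -> set V, monotone_op T' -> (forall x, T x `<=` T' x) -> T' = T.

Definition add_j (f : V -> \bar R) (lam : R) (x : V) : \bar R :=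
  (f x + (lam^-1 * jfun x)%:E)%E.

End Defs.

(* Main.v *)
Require Import Defs.
From mathcomp Require Import all_boot all_order all_algebra.
From mathcomp Require Import boolp classical_sets reals constructive_ereal ereal.
From mathcomp Require topology normedtype.
From mathcomp Require ring lra.
Import Order.TTheory GRing.Theory Num.Theory.
Local Open Scope classical_set_scope.
Local Open Scope ring_scope.

Module P1.
Import ring lra.
Set Implicit Arguments. Unset Strict Implicit. Unset Printing Implicit Defensive.
Import Order.TTheory GRing.Theory Num.Theory.
Local Open Scope classical_set_scope.
Local Open Scope ring_scope.

Section LinAlg.
Variables (R : realType) (n : nat).
Local Notation V := 'rV[R]_n.
Implicit Types (u v w : V).

Lemma dotpC u v : dotp u v = dotp v u.
Proof. by apply: eq_bigr => i _; rewrite mulrC. Qed.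

Lemma dotpDl u v w : dotp (u + v) w = dotp u w + dotp v w.
Proof. by rewrite /dotp -big_split /=; apply: eq_bigr => i _; rewrite !mxE mulrDl. Qed.

Lemma dotpZl (a : R) u v : dotp (a *: u) v = a * dotp u v.
Proof. by rewrite /dotp mulr_sumr; apply: eq_bigr => i _; rewrite !mxE mulrA. Qed.

Lemma dotp0l v : dotp 0 v = 0.
Proof. by rewrite /dotp big1 // => i _; rewrite mxE mul0r. Qed.

Lemma dotpNl u v : dotp (- u) v = - dotp u v.
Proof. by rewrite -scaleN1r dotpZl mulN1r. Qed.

Lemma dotpBl u v w : dotp (u - v) w = dotp u w - dotp v w.
Proof. by rewrite dotpDl dotpNl. Qed.

Lemma dotpDr u v w : dotp w (u + v) = dotp w u + dotp w v.
Proof. by rewrite dotpC dotpDl !(dotpC w). Qed.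

Lemma dotpZr (a : R) u v : dotp v (a *: u) = a * dotp v u.
Proof. by rewrite dotpC dotpZl dotpC. Qed.

Lemma dotp0r v : dotp v 0 = 0.
Proof. by rewrite dotpC dotp0l. Qed.

Lemma dotpNr u v : dotp v (- u) = - dotp v u.
Proof. by rewrite dotpC dotpNl dotpC. Qed.

Lemma dotpBr u v w : dotp w (u - v) = dotp w u - dotp w v.
Proof. by rewrite dotpDr dotpNr. Qed.

Lemma dotp_suml m (F : 'I_m -> V) v :
  dotp (\sum_(i < m) F i) v = \sum_(i < m) dotp (F i) v.
Proof.
elim/big_rec2: _ => [|i y1 y2 _ <-]; first by rewrite dotp0l.
by rewrite dotpDl.
Qed.

Lemma dotp_sumr m (F : 'I_m -> V) v :
  dotp v (\sum_(i < m) F i) = \sum_(i < m) dotp v (F i).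
Proof. by rewrite dotpC dotp_suml; apply: eq_bigr => i _; rewrite dotpC. Qed.

Lemma sqn_ge0 u : 0 <= sqn u.
Proof. by apply: sumr_ge0 => i _; rewrite -expr2 sqr_ge0. Qed.


Lemma sqn_eq0 u : sqn u = 0 -> u = 0.
Proof.
move=> h; apply/rowP => i; rewrite mxE.
have H := @psumr_eq0P R _ xpredT (fun i => u 0 i * u 0 i).
have /eqP := H (fun i _ => (sqr_ge0 (u 0 i))) h i isT.
by rewrite mulf_eq0 orbb => /eqP.
Qed.

Lemma sqnD u v : sqn (u + v) = sqn u + 2 * dotp u v + sqn v.
Proof. rewrite /sqn !dotpDl !dotpDr (dotpC v u); ring. Qed.

Lemma sqnB u v : sqn (u - v) = sqn u - 2 * dotp u v + sqn v.
Proof. rewrite /sqn !dotpBl !dotpBr (dotpC v u); ring. Qed.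

Lemma sqnZ (a : R) u : sqn (a *: u) = a ^+ 2 * sqn u.
Proof. by rewrite /sqn dotpZl dotpZr mulrA expr2. Qed.

Lemma sqnN u : sqn (- u) = sqn u.
Proof. by rewrite /sqn dotpNl dotpNr opprK. Qed.

Lemma sqn0 : sqn (0 : V) = 0.
Proof. by rewrite /sqn dotp0l. Qed.

Lemma enorm_ge0 u : 0 <= enorm u.
Proof. exact: sqrtr_ge0. Qed.

Lemma enorm_sqr u : enorm u ^+ 2 = sqn u.
Proof. by rewrite /enorm sqr_sqrtr // sqn_ge0. Qed.

Lemma enormZ (a : R) u : enorm (a *: u) = `|a| * enorm u.
Proof. by rewrite /enorm sqnZ sqrtrM ?sqr_ge0 // sqrtr_sqr. Qed.

Lemma enormB u v : enorm (u - v) = enorm (v - u).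
Proof. by rewrite -opprB /enorm sqnN. Qed.

Lemma enorm0 : enorm (0 : V) = 0.
Proof. by rewrite /enorm sqn0 sqrtr0. Qed.

Lemma enorm_lt u d : 0 < d -> (enorm u < d) = (sqn u < d ^+ 2).
Proof.
move=> d0; rewrite /enorm -{1}(ger0_norm (ltW d0)) -sqrtr_sqr ltr_sqrt //.
by rewrite exprn_gt0.
Qed.

Lemma CS u v : `|dotp u v| <= enorm u * enorm v.
Proof.
set a := enorm u; set b := enorm v.
have ha : sqn u = a ^+ 2 by rewrite enorm_sqr.
have hb : sqn v = b ^+ 2 by rewrite enorm_sqr.
have a0 : 0 <= a by apply: enorm_ge0.
have b0 : 0 <= b by apply: enorm_ge0.
have [ae|an0] := eqVneq a 0.
  have : u = 0 by apply: sqn_eq0; rewrite ha ae expr0n.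
  by move=> ->; rewrite dotp0l normr0 mulr_ge0.
have [be|bn0] := eqVneq b 0.
  have : v = 0 by apply: sqn_eq0; rewrite hb be expr0n.
  by move=> ->; rewrite dotp0r normr0 mulr_ge0.
have ap : 0 < a by rewrite lt_def an0.
have bp : 0 < b by rewrite lt_def bn0.
have h1 := sqn_ge0 (b *: u - a *: v).
have h2 := sqn_ge0 (b *: u + a *: v).
rewrite sqnB sqnZ sqnZ dotpZl dotpZr ha hb in h1.
rewrite sqnD sqnZ sqnZ dotpZl dotpZr ha hb in h2.
have abp : 0 < a * b by apply: mulr_gt0.
rewrite ler_norml; apply/andP; split.
  rewrite -(ler_pM2l abp); nra.
rewrite -(ler_pM2l abp); nra.
Qed.

Lemma dotp_lb u a (c : R) : 0 < c -> - (c * sqn u + sqn a / (4 * c)) <= dotp u a.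
Proof.
move=> c0.
have h := sqn_ge0 ((2 * c) *: u + a).
rewrite sqnD sqnZ dotpZl in h.
have c4 : 0 < 4 * c by rewrite mulr_gt0.
have e : (4 * c) * (sqn a / (4 * c)) = sqn a.
  by rewrite mulrCA mulfV ?gt_eqF // mulr1.
rewrite -(ler_pM2l c4) mulrN mulrDr e.
nra.
Qed.

Lemma enormD u v : enorm (u + v) <= enorm u + enorm v.
Proof.
have h : sqn (u + v) <= (enorm u + enorm v) ^+ 2.
  rewrite sqnD -(enorm_sqr u) -(enorm_sqr v).
  have := CS u v; have := ler_norm (dotp u v).
  have := enorm_ge0 u; have := enorm_ge0 v; nra.
rewrite /enorm; apply: le_trans (ler_wsqrtr h) _.
by rewrite sqrtr_sqr ger0_norm // addr_ge0 // enorm_ge0.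
Qed.

End LinAlg.

End P1.
Import P1.

Module P2.
Import ring lra.
Set Implicit Arguments. Unset Strict Implicit. Unset Printing Implicit Defensive.
Import Order.TTheory GRing.Theory Num.Theory.
Local Open Scope classical_set_scope.
Local Open Scope ring_scope.

Section Reals.
Variable R : realType.

Lemma le_eps (a b : R) : (forall e, 0 < e -> a <= b + e) -> a <= b.
Proof.
move=> h; rewrite leNgt; apply/negP => ab.
have := h ((a - b) / 2); rewrite divr_gt0 ?subr_gt0 // => /(_ isT).
lra.
Qed.

Lemma le_small_t (a b : R) : (forall t, 0 < t -> t <= 1 -> a <= t * b) -> a <= 0.
Proof.
move=> h; rewrite leNgt; apply/negP => a0.
set t := a / (a + `|b| + 1).
have hp : 0 < a + `|b| + 1 by have := normr_ge0 b; lra.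
have e : t * (a + `|b| + 1) = a by rewrite /t mulfVK ?gt_eqF.
have t0 : 0 < t by rewrite divr_gt0.
have t1 : t <= 1.
  by rewrite /t ler_pdivrMr // mul1r; have := normr_ge0 b; lra.
have := h t t0 t1.
have : t * b <= t * `|b| by rewrite ler_pM2l // ler_norm.
have := normr_ge0 b.
nra.
Qed.

End Reals.

Section Combos.
Variables (R : realType) (n : nat).
Local Notation V := 'rV[R]_n.

Lemma convcomb1 (y : V) : convcomb (fun _ : 'I_1 => 1) (fun _ => y) y.
Proof. by split=> [i|]; [|split]; rewrite ?big_ord1 ?scale1r. Qed.

Lemma convcomb_dotp m (w : 'I_m -> R) (p : 'I_m -> V) x a :
  convcomb w p x -> dotp x a = \sum_(i < m) w i * dotp (p i) a.
Proof.
move=> [_ [_ ->]]; rewrite dotp_suml; apply: eq_bigr => i _; exact: dotpZl.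
Qed.

Lemma convcomb_const m (w : 'I_m -> R) (p : 'I_m -> V) x (c : R) :
  convcomb w p x -> \sum_(i < m) w i * c = c.
Proof. by move=> [_ [h _]]; rewrite -mulr_suml h mul1r. Qed.

Lemma convex_combo (S : set V) : convex_set S ->
  forall m (w : 'I_m -> R) (p : 'I_m -> V) x,
  convcomb w p x -> (forall i, S (p i)) -> S x.
Proof.
move=> cS; elim=> [|m IH] w p x [w0 [w1 ->]] Sp.
  by move: w1; rewrite big_ord0 => /eqP; rewrite eq_sym oner_eq0.
rewrite big_ord_recr /=; move: w1; rewrite big_ord_recr /= => w1.
set wl := w ord_max in w1 *; set s := \sum_(i < m) w (widen_ord (leqnSn m) i) in w1 *.
have s0 : 0 <= s by apply: sumr_ge0 => i _; exact: w0.
have wl0 : 0 <= wl by exact: w0.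
have [s_eq0|sn0] := eqVneq s 0.
  have wi0 : forall i : 'I_m, w (widen_ord (leqnSn m) i) = 0.
    move=> i; have := @psumr_eq0P R _ xpredT (fun i : 'I_m => w (widen_ord (leqnSn m) i)).
    by move=> /(_ (fun i _ => w0 _) s_eq0 i isT).
  rewrite big1 ?add0r; last by move=> i _; rewrite wi0 scale0r.
  have -> : wl = 1 by move: w1; rewrite s_eq0 add0r.
  by rewrite scale1r.
have sp : 0 < s by rewrite lt_def sn0 s0.
set x' := \sum_(i < m) (w (widen_ord (leqnSn m) i) / s) *: p (widen_ord (leqnSn m) i).
have Sx' : S x'.
  apply: (IH (fun i => w (widen_ord (leqnSn m) i) / s) (fun i => p (widen_ord (leqnSn m) i))).
    split; first by move=> i; rewrite divr_ge0.
    by split => //; rewrite -mulr_suml mulfV.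
  by move=> i; exact: Sp.
have -> : \sum_(i < m) w (widen_ord (leqnSn m) i) *: p (widen_ord (leqnSn m) i)
         = s *: x'.
  rewrite /x' scaler_sumr; apply: eq_bigr => i _.
  by rewrite scalerA mulrCA mulfV // mulr1.
have -> : s = 1 - wl by move: w1; lra.
rewrite addrC; apply: cS => //.
apply/andP; split => //; lra.
Qed.

End Combos.

Section Seqs.
Variables (R : realType) (n : nat).
Local Notation V := 'rV[R]_n.

Lemma rcvg_le (a : nat -> R) al c : rcvg a al -> (forall k, a k <= c) -> al <= c.
Proof.
move=> ha hk; rewrite leNgt; apply/negP => cl.
have [|N hN] := ha (al - c); first by rewrite subr_gt0.
have := hN N (leqnn N); have := hk N; rewrite ltr_norml; lra.
Qed.

Lemma rcvg_const (c : R) : rcvg (fun _ => c) c.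
Proof. by move=> e e0; exists 0%N => k _; rewrite subrr normr0. Qed.

Lemma vcvg_const (c : V) : vcvg (fun _ => c) c.
Proof. by move=> e e0; exists 0%N => k _; rewrite subrr enorm0. Qed.

Lemma rcvg_add (a b : nat -> R) al bl :
  rcvg a al -> rcvg b bl -> rcvg (fun k => a k + b k) (al + bl).
Proof.
move=> ha hb e e0.
have e2 : 0 < e / 2 by rewrite divr_gt0.
have [N1 h1] := ha _ e2; have [N2 h2] := hb _ e2.
exists (maxn N1 N2) => k hk.
have := h1 k (leq_trans (leq_maxl _ _) hk).
have := h2 k (leq_trans (leq_maxr _ _) hk).
have -> : a k + b k - (al + bl) = (a k - al) + (b k - bl) by ring.
move=> u v; apply: (le_lt_trans (ler_normD _ _)); lra.
Qed.

Lemma rcvg_scale (a : nat -> R) al (c : R) :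
  rcvg a al -> rcvg (fun k => c * a k) (c * al).
Proof.
move=> ha e e0.
have cp : 0 < `|c| + 1 by have := normr_ge0 c; lra.
have [N h] := ha (e / (`|c| + 1)) (divr_gt0 e0 cp).
exists N => k hk; rewrite -mulrBr normrM.
have := h k hk; rewrite ltr_pdivlMr // => hh.
have := normr_ge0 c; have := normr_ge0 (a k - al).
nra.
Qed.

Lemma dotp_diff (a b al bl : V) :
  dotp a b - dotp al bl = dotp (a - al) (b - bl) + dotp (a - al) bl + dotp al (b - bl).
Proof. rewrite !dotpBl !dotpBr; ring. Qed.

Lemma rcvg_dotp (a b : nat -> V) al bl :
  vcvg a al -> vcvg b bl -> rcvg (fun k => dotp (a k) (b k)) (dotp al bl).
Proof.
move=> ha hb e e0.
set ea := enorm al; set eb := enorm bl.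
have ea0 : 0 <= ea by apply: enorm_ge0.
have eb0 : 0 <= eb by apply: enorm_ge0.
have K0 : 0 < 1 + ea + eb by lra.
set d := Num.min 1 (e / (1 + ea + eb)).
have d0 : 0 < d by rewrite lt_min ltr01 divr_gt0.
have d1 : d <= 1 by rewrite ge_min lexx.
have de : d * (1 + ea + eb) <= e.
  by rewrite -ler_pdivlMr // ge_min lexx orbT.
have [N1 h1] := ha _ d0; have [N2 h2] := hb _ d0.
exists (maxn N1 N2) => k hk.
have A := h1 k (leq_trans (leq_maxl _ _) hk).
have B := h2 k (leq_trans (leq_maxr _ _) hk).
rewrite dotp_diff.
set A' := enorm (a k - al) in A *; set B' := enorm (b k - bl) in B *.
have A0 : 0 <= A' by apply: enorm_ge0.
have B0 : 0 <= B' by apply: enorm_ge0.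
have c1 := CS (a k - al) (b k - bl).
have c2 := CS (a k - al) bl.
have c3 := CS al (b k - bl).
rewrite -/A' -/B' -/ea -/eb in c1 c2 c3.
apply: (le_lt_trans (ler_normD _ _)).
apply: (le_lt_trans (lerD (ler_normD _ _) (lexx _))).
have h3 : A' * B' <= A' by rewrite ler_piMr //; apply: ltW; apply: (lt_le_trans B).
have h4 : A' * eb <= d * eb by rewrite ler_wpM2r // ltW.
have h5 : ea * B' <= ea * d by rewrite ler_wpM2l // ltW.
nra.
Qed.

Lemma vcvg_add (a b : nat -> V) al bl :
  vcvg a al -> vcvg b bl -> vcvg (fun k => a k + b k) (al + bl).
Proof.
move=> ha hb e e0.
have e2 : 0 < e / 2 by rewrite divr_gt0.
have [N1 h1] := ha _ e2; have [N2 h2] := hb _ e2.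
exists (maxn N1 N2) => k hk.
have := h1 k (leq_trans (leq_maxl _ _) hk).
have := h2 k (leq_trans (leq_maxr _ _) hk).
have -> : a k + b k - (al + bl) = (a k - al) + (b k - bl).
  by rewrite opprD addrACA.
move=> u v; apply: (le_lt_trans (enormD _ _)); lra.
Qed.

Lemma vcvg_scale (a : nat -> V) al (c : R) :
  vcvg a al -> vcvg (fun k => c *: a k) (c *: al).
Proof.
move=> ha e e0.
have cp : 0 < `|c| + 1 by have := normr_ge0 c; lra.
have [N h] := ha (e / (`|c| + 1)) (divr_gt0 e0 cp).
exists N => k hk; rewrite -scalerBr enormZ.
have := h k hk; rewrite ltr_pdivlMr // => hh.
have := normr_ge0 c; have := enorm_ge0 (a k - al).
nra.
Qed.

End Seqs.

Section Cont.
Variables (R : realType) (n : nat).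
Local Notation V := 'rV[R]_n.

Definition rcont (r : V -> R) := forall y (e : R), 0 < e ->
  exists2 d : R, 0 < d & forall y', enorm (y' - y) < d -> `|r y' - r y| < e.

Lemma rcont_const c : rcont (fun _ => c).
Proof. by move=> y e e0; exists 1 => // y' _; rewrite subrr normr0. Qed.

Lemma rcont_dotp (a : V) : rcont (fun y => dotp a y).
Proof.
move=> y e e0.
have ea0 := enorm_ge0 a.
exists (e / (enorm a + 1)); first by rewrite divr_gt0 //; lra.
move=> y' hy; rewrite -dotpBr.
apply: (le_lt_trans (CS _ _)).
move: hy; rewrite ltr_pdivlMr; last lra.
have := enorm_ge0 (y' - y); nra.
Qed.

Lemma rcont_sqn : rcont (@sqn R n).
Proof.
move=> y e e0.
set ey := enorm y.
have ey0 : 0 <= ey by apply: enorm_ge0.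
have K0 : 0 < 1 + 2 * ey by lra.
set d := Num.min 1 (e / (1 + 2 * ey)).
have d0 : 0 < d by rewrite lt_min ltr01 divr_gt0.
have d1 : d <= 1 by rewrite ge_min lexx.
have de : d * (1 + 2 * ey) <= e.
  by rewrite -ler_pdivlMr // ge_min lexx orbT.
exists d => // y' hy.
have -> : sqn y' - sqn y = sqn (y' - y) + 2 * dotp y (y' - y).
  by rewrite sqnB dotpBr /sqn (dotpC y' y); ring.
set D := enorm (y' - y) in hy *.
have D0 : 0 <= D by apply: enorm_ge0.
have c1 := CS y (y' - y); rewrite -/D -/ey in c1.
apply: (le_lt_trans (ler_normD _ _)).
rewrite ger0_norm ?sqn_ge0 // -enorm_sqr -/D normrM ger0_norm //.
have h3 : D ^+ 2 <= D.
  rewrite expr2 ler_piMr //; apply: ltW; apply: (lt_le_trans hy d1).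
nra.
Qed.

Lemma rcont_add (r s : V -> R) : rcont r -> rcont s -> rcont (fun y => r y + s y).
Proof.
move=> hr hs y e e0.
have e2 : 0 < e / 2 by rewrite divr_gt0.
have [d1 d10 h1] := hr y _ e2; have [d2 d20 h2] := hs y _ e2.
exists (Num.min d1 d2); first by rewrite lt_min d10 d20.
move=> y'; rewrite lt_min => /andP [a b].
have := h1 _ a; have := h2 _ b.
have -> : r y' + s y' - (r y + s y) = (r y' - r y) + (s y' - s y) by ring.
move=> u v; apply: (le_lt_trans (ler_normD _ _)); lra.
Qed.

Lemma rcont_scale (r : V -> R) c : rcont r -> rcont (fun y => c * r y).
Proof.
move=> hr y e e0.
have cp : 0 < `|c| + 1 by have := normr_ge0 c; lra.
have [d d0 h] := hr y (e / (`|c| + 1)) (divr_gt0 e0 cp).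
exists d => // y' hy; rewrite -mulrBr normrM.
have := h y' hy; rewrite ltr_pdivlMr // => hh.
have := normr_ge0 c; have := normr_ge0 (r y' - r y).
nra.
Qed.

End Cont.

End P2.
Import P2.

Module P3.
Import topology normedtype.
Import ring lra.
Set Implicit Arguments. Unset Strict Implicit. Unset Printing Implicit Defensive.
Import Order.TTheory GRing.Theory Num.Theory numFieldNormedType.Exports.
Local Open Scope classical_set_scope.
Local Open Scope ring_scope.

Section Lsc.
Variables (R : realType) (n : nat).
Local Notation V := 'rV[R]_n.

Lemma subgt0 (a b : R) : a < b -> 0 < b - a.
Proof. by rewrite subr_gt0. Qed.

Lemma ereal_between (c : R) (z : \bar R) : (c%:E < z)%E ->
  exists2 b : R, c < b & (b%:E < z)%E.
Proof.
case: z => [v| |] //=; rewrite ?lte_fin => h.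
- by exists ((c + v) / 2); rewrite ?lte_fin; lra.
- by exists (c + 1); [lra|rewrite ltry].
Qed.

Lemma lsc_addr (phi : V -> \bar R) (r : V -> R) :
  lsc phi -> rcont r -> lsc (fun y => (phi y + (r y)%:E)%E).
Proof.
move=> hphi hr x a ha.
have h1 : ((a - r x)%:E < phi x)%E.
  move: ha; case: (phi x) => [v| |] //=; rewrite ?lte_fin ?ltry //; lra.
have [b ab bphi] := ereal_between h1.
have [d1 d10 hd1] := hphi x b bphi.
have [d2 d20 hd2] := hr x (b - (a - r x)) (subgt0 ab).
exists (Num.min d1 d2); first by rewrite lt_min d10 d20.
move=> y; rewrite lt_min => /andP [y1 y2].
have := hd1 y y1; have := hd2 y y2.
case: (phi y) => [v| |] //=; rewrite ?lte_fin ?ltry //.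
rewrite ltr_norml => /andP [u1 u2] u3; lra.
Qed.

Lemma lsc_EFin (r : V -> R) : rcont r -> lsc (fun y => (r y)%:E).
Proof.
move=> hr x a; rewrite lte_fin => ha.
have [d d0 hd] := hr x (r x - a) (subgt0 ha).
exists d => // y hy; rewrite lte_fin.
by have := hd y hy; rewrite ltr_norml => /andP [u1 u2]; lra.
Qed.

Definition closedS (S : set V) := forall y, ~ S y ->
  exists2 d : R, 0 < d & forall y', enorm (y' - y) < d -> ~ S y'.

Lemma lsc_restr (phi : V -> \bar R) (S : set V) :
  lsc phi -> closedS S -> lsc (fun y => if `[< S y >] then phi y else +oo%E).
Proof.
move=> hphi hS x a.
case: (asboolP (S x)) => Sx ha.
  have [d d0 hd] := hphi x a ha.
  exists d => // y hy; case: (asboolP (S y)) => _; last by rewrite ltry.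
  exact: hd.
have [d d0 hd] := hS x Sx.
exists d => // y hy; case: (asboolP (S y)) => Sy; last by rewrite ltry.
by have := hd y hy.
Qed.

Lemma closed_sublevel (phi : V -> \bar R) (c : R) :
  lsc phi -> closedS (fun y => (phi y <= c%:E)%E).
Proof.
move=> hphi y /negP; rewrite -ltNge => h.
have [d d0 hd] := hphi y c h.
by exists d => // y' hy; apply/negP; rewrite -ltNge; exact: hd.
Qed.

Lemma closed_halfspace (u : V) (g : R) : closedS (fun y => g <= dotp u y).
Proof.
move=> y /negP; rewrite -ltNge => h.
have [d d0 hd] := rcont_dotp u y (subgt0 h).
exists d => // y' hy; have := hd y' hy; rewrite ltr_norml => /andP [u1 u2].
lra.
Qed.

Lemma nbhs_enorm (y : V) (d : R) : 0 < d -> nbhs y [set z | enorm (z - y) < d].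
Proof.
move=> d0; apply/nbhs_ballP.
have n1 : 0 < n.+1%:R :> R by rewrite ltr0n.
set e := d / n.+1%:R.
have e0 : 0 < e by rewrite divr_gt0.
exists e => // z [_ hz] /=.
rewrite enorm_lt // /sqn /dotp.
have hi : forall i, (z - y) 0 i * (z - y) 0 i <= e ^+ 2.
  move=> i; have := hz ord0 i; rewrite -ball_normE /ball_ /= => h.
  rewrite -expr2 -real_normK ?num_real // ; rewrite -normrN.
  rewrite lerXn2r // ?nnegrE ?normr_ge0 ?ltW //.
  by rewrite !mxE opprB; exact: h.
apply: (le_lt_trans (ler_sum _ (fun i _ => hi i))).
rewrite sumr_const card_ord.
have ed : e * n.+1%:R = d by rewrite /e mulfVK ?gt_eqF.
rewrite -mulr_natr.
have hN : n.+1%:R = n%:R + 1 :> R by rewrite -natr1.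
rewrite hN in ed.
have N0 : 0 <= n%:R :> R by rewrite ler0n.
rewrite -ed; nra.
Qed.

Lemma coord_le_sqn (y : V) i : y 0 i ^+ 2 <= sqn y.
Proof.
rewrite /sqn /dotp (bigD1 i) //= -expr2 lerDl.
by apply: sumr_ge0 => j _; rewrite -expr2 sqr_ge0.
Qed.

Lemma MinEx (phi : V -> \bar R) :
  lsc phi -> (exists x0, (phi x0 < +oo)%E) ->
  (exists c : R, 0 < c /\ exists C : R, forall y, ((c * sqn y - C)%:E <= phi y)%E) ->
  exists ys, forall y, (phi ys <= phi y)%E.
Proof.
move=> hphi [x0 hx0] [c [c0 [C hC]]].
set m := ereal_inf [set phi y | y in [set: V]].
have mle : forall y, (m <= phi y)%E by move=> y; apply: ereal_inf_lbound; exists y.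
have mlb : ((- C)%:E <= m)%E.
  apply: le_ereal_inf_tmp => _ [y _ <-]; apply: le_trans (hC y); rewrite lee_fin.
  have := sqn_ge0 y; nra.
have mfin : m \is a fin_num.
  rewrite fin_numE; apply/andP; split.
    by apply/negP => /eqP me; move: mlb; rewrite me.
  by apply/negP => /eqP me; have := mle x0; rewrite me leye_eq => /eqP h; move: hx0; rewrite h.
set mr := fine m.
have mE : m = mr%:E by rewrite fineK.
pose B (e : R) := [set y | (phi y <= (mr + e)%:E)%E].
pose F := filter_from [set e : R | 0 < e] B.
have FF : Filter F.
  apply: filter_from_filter; first by exists 1; rewrite /= ltr01.
  move=> i j i0 j0; exists (Num.min i j); first by rewrite /= lt_min i0 j0.
  move=> y /= hy; split; apply: (le_trans hy); rewrite lee_fin lerD2l ge_min lexx ?orbT //.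
have FP : ProperFilter F.
  apply: filter_from_proper => e e0.
  have [_ [y _ <-] hy] := lb_ereal_inf_adherent e0 mfin.
  by exists y; rewrite /B /=; apply: ltW; rewrite EFinD -mE.
set rho := (mr + 1 + C) / c.
set b := 1 + rho.
set K := [set v : V | forall i, `[- b, b]%classic (v ord0 i)].
have cK : compact K by exact: (@rV_compact R n (fun=> `[- b, b]%classic) (fun=> @segment_compact R (-b) b)).
have FK : F K.
  exists 1; first by rewrite /= ltr01.
  move=> y /= hy i.
  have h1 := le_trans (hC y) hy; rewrite lee_fin in h1.
  have h2 : sqn y <= rho by rewrite /rho ler_pdivlMr //; lra.
  have h3 := coord_le_sqn y i.
  rewrite /= in_itv /=; rewrite -ler_norml.
  have := normr_ge0 (y ord0 i).
  have: `|y ord0 i| ^+ 2 = y ord0 i ^+2 by rewrite real_normK ?num_real.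
  move: h3; rewrite [ord0]ord1 => h3 e.
  move=> hn; have := sqr_ge0 (`|y 0 i| - 1); rewrite /b; nra.
have [ys [_ hys]] := cK F FP FK.
exists ys => y; apply: le_trans (mle y).
rewrite leNgt; apply/negP => hlt.
rewrite mE in hlt.
have [bb mb hbb] := ereal_between hlt.
have [d d0 hd] := hphi ys bb hbb.
have FB : F (B (bb - mr)) by exists (bb - mr) => //=; rewrite subr_gt0.
have [z [Bz nz]] := hys _ _ FB (nbhs_enorm ys d0).
have := hd z nz; rewrite ltNge; move: Bz; rewrite /B /= addrC subrK => ->.
by [].
Qed.

End Lsc.

End P3.
Import P3.

Module P4.
Import ring lra.
Set Implicit Arguments. Unset Strict Implicit. Unset Printing Implicit Defensive.
Import Order.TTheory GRing.Theory Num.Theory.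
Local Open Scope classical_set_scope.
Local Open Scope ring_scope.

Section Generic.
Variables (R : realType) (n : nat).
Local Notation V := 'rV[R]_n.

Lemma le_eps_mul (A B e : R) : 0 <= e ->
  (forall eps, 0 < eps -> A - eps * e <= B) -> A <= B.
Proof.
move=> e0 h; apply: le_eps => eta eta0.
have e1 : 0 < e + 1 by lra.
have := h (eta / (e + 1)) (divr_gt0 eta0 e1).
have : eta / (e + 1) * e <= eta.
  rewrite mulrAC ler_pdivrMr // ler_wpM2l; lra.
lra.
Qed.

Lemma frechet_global (phi : V -> \bar R) x v :
  convex_fun phi -> (forall y, phi y != -oo%E) -> frechet_subdiff phi x v ->
  forall y, (phi x + (dotp v (y - x))%:E <= phi y)%E.
Proof.
move=> cphi ninf [xfin hfr] y.
have := ninf y; case Ey: (phi y) => [b| |] // _; last by rewrite leey.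
have xE : phi x = (fine (phi x))%:E by rewrite fineK.
set a := fine (phi x) in xE *.
rewrite xE -EFinD lee_fin.
set e := enorm (y - x).
have e0 : 0 <= e by apply: enorm_ge0.
apply: (le_eps_mul e0) => eps eps0.
have [d d0 hd] := hfr eps eps0.
set t := d / (d + e).
have de : 0 < d + e by lra.
have t0 : 0 < t by rewrite divr_gt0.
have t1 : t <= 1 by rewrite ler_pdivrMr // mul1r; lra.
have te : t * e < d.
  rewrite /t mulrAC ltr_pdivrMr //; have : 0 < d * d by rewrite mulr_gt0.
  nra.
set z := t *: y + (1 - t) *: x.
have zx : z - x = t *: (y - x).
  by rewrite /z scalerBr scalerBl scale1r addrA (addrAC _ x) addrK.
have ez : enorm (z - x) = t * e by rewrite zx enormZ ger0_norm // ltW.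
have h1 := hd z (ltac:(by rewrite ez)).
rewrite ez zx dotpZr -/a in h1.
have h2 : (phi z <= t%:E * phi y + (1 - t)%:E * phi x)%E.
  apply: cphi; rewrite /dom /= ?Ey ?xE ?ltry //.
  by apply/andP; split; [apply: ltW|].
rewrite Ey xE -!EFinM -EFinD in h2.
have := le_trans h1 h2; rewrite lee_fin => h3.
have : t * (a + dotp v (y - x) - eps * e) <= t * b by nra.
by rewrite ler_pM2l.
Qed.

Lemma lim_global (phi : V -> \bar R) (xs ws : nat -> V) x w :
  (forall k, phi (xs k) \is a fin_num /\
     forall y, (phi (xs k) + (dotp (ws k) (y - xs k))%:E <= phi y)%E) ->
  vcvg xs x -> vcvg ws w -> rcvg (fun k => fine (phi (xs k))) (fine (phi x)) ->
  phi x \is a fin_num ->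
  forall y, (phi x + (dotp w (y - x))%:E <= phi y)%E.
Proof.
move=> hk cx cw cphi xfin y.
have [fin0 h0] := hk 0%N.
have := h0 y; rewrite -(fineK fin0) -EFinD.
case Ey: (phi y) => [b| |] // _; last by rewrite leey.
rewrite -(fineK xfin) -EFinD lee_fin.
have hl : rcvg (fun k => fine (phi (xs k)) + (dotp (ws k) y + (-1) * dotp (ws k) (xs k)))
              (fine (phi x) + (dotp w y + (-1) * dotp w x)).
  apply: rcvg_add => //; apply: rcvg_add.
    by apply: rcvg_dotp => //; exact: vcvg_const.
  by apply: rcvg_scale; exact: rcvg_dotp.
have -> : fine (phi x) + dotp w (y - x) = fine (phi x) + (dotp w y + (-1) * dotp w x).
  by rewrite dotpBr mulN1r.
apply: (rcvg_le hl) => k.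
have [fk hk'] := hk k.
have := hk' y; rewrite -(fineK fk) -EFinD Ey lee_fin dotpBr mulN1r.
by [].
Qed.

Lemma lim_convex (phi : V -> \bar R) x v :
  convex_fun phi -> (forall y, phi y != -oo%E) -> lim_subdiff phi x v ->
  forall y, (phi x + (dotp v (y - x))%:E <= phi y)%E.
Proof.
move=> cphi ninf [xfin [xs [vs [cx [cf [fr cv]]]]]].
apply: (lim_global (xs := xs) (ws := vs)) => // k; split.
  by have [] := fr k.
exact: frechet_global.
Qed.

Lemma global_frechet (phi : V -> \bar R) x v :
  phi x \is a fin_num ->
  (forall y, (phi x + (dotp v (y - x))%:E <= phi y)%E) ->
  frechet_subdiff phi x v.
Proof.
move=> xfin h; split => // eps eps0; exists 1 => // y _.
apply: le_trans (h y); rewrite -{2}(fineK xfin) -EFinD lee_fin.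
have := enorm_ge0 (y - x); nra.
Qed.

Lemma frechet_lim (phi : V -> \bar R) x v :
  frechet_subdiff phi x v -> lim_subdiff phi x v.
Proof.
move=> hf; split; first by case: hf.
exists (fun _ => x), (fun _ => v); split; first exact: vcvg_const.
split; first exact: rcvg_const.
by split => // k; exact: vcvg_const.
Qed.

End Generic.

End P4.
Import P4.

Module P5.
Import ring lra.
Set Implicit Arguments. Unset Strict Implicit. Unset Printing Implicit Defensive.
Import Order.TTheory GRing.Theory Num.Theory.
Local Open Scope classical_set_scope.
Local Open Scope ring_scope.

Section Spec.
Variables (R : realType) (n : nat) (f : 'rV[R]_n -> \bar R) (lam : R).
Local Notation V := 'rV[R]_n.
Hypothesis fprop : proper_fun f.
Hypothesis lam0 : 0 < lam.

Definition Jf (y : V) := lam^-1 * jfun y.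
Definition Ff (y : V) := fine (f y).
Definition gr (y : V) := Ff y + Jf y.
Definition gsub (x w : V) := dom f x /\ forall y, dom f y -> gr x + dotp w (y - x) <= gr y.

Lemma f_ninf y : f y != -oo%E.
Proof. by case: fprop. Qed.

Lemma finE y : dom f y -> f y = (Ff y)%:E.
Proof.
rewrite /dom /Ff /=; have := f_ninf y; by case: (f y).
Qed.

Lemma ndom y : ~ dom f y -> f y = +oo%E.
Proof.
rewrite /dom /=; have := f_ninf y; case: (f y) => // r _ h; exfalso; apply: h; exact: ltry.
Qed.

Lemma gE y : dom f y -> add_j f lam y = (gr y)%:E.
Proof. by move=> /finE; rewrite /add_j /gr => ->; rewrite EFinD. Qed.

Lemma dom_g y : dom (add_j f lam) y <-> dom f y.
Proof.
rewrite /dom /add_j /=; have := f_ninf y; case: (f y) => //= r _; split => // _; exact: ltry.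
Qed.

Lemma g_ninf y : add_j f lam y != -oo%E.
Proof. by rewrite /add_j; have := f_ninf y; case: (f y). Qed.

Lemma Jdiff x y : Jf y = Jf x + dotp (lam^-1 *: x) (y - x) + pen lam x y.
Proof.
rewrite /Jf /jfun /pen dotpZl.
have -> : sqn y = sqn (x + (y - x)) by rewrite addrCA subrr addr0.
rewrite sqnD.
by field; rewrite gt_eqF.
Qed.

Lemma pen_ge0 (x y : V) : 0 <= pen lam x y.
Proof. by rewrite /pen divr_ge0 ?sqn_ge0 // mulr_ge0 // ltW. Qed.

Lemma penE (z y : V) : pen lam z y = Jf y - lam^-1 * dotp z y + Jf z.
Proof.
rewrite /Jf /jfun /pen sqnB (dotpC y z); by field; rewrite gt_eqF.
Qed.

Lemma pen_le (x y : V) (eps : R) : 0 < eps -> enorm (y - x) < 2 * lam * eps ->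
  pen lam x y <= eps * enorm (y - x).
Proof.
move=> e0 h; rewrite /pen -enorm_sqr.
have e0' := enorm_ge0 (y - x).
set e := enorm (y - x) in h e0' *; clearbody e.
have l2 : 0 < 2 * lam by rewrite mulr_gt0.
rewrite ler_pdivrMr //; nra.
Qed.

Lemma psub_gsub x v : prox_subdiff f lam x v <-> gsub x (v + lam^-1 *: x).
Proof.
split.
  move=> [dx h]; split => // y dy.
  have := h y; rewrite (finE dx) (finE dy) -EFinD lee_fin /gr (Jdiff x y) dotpDl.
  lra.
move=> [dx h]; split => // y.
have [dy|ndy] := pselect (dom f y); last by rewrite (ndom ndy) leey.
have := h y dy; rewrite (finE dx) (finE dy) -EFinD lee_fin /gr (Jdiff x y) dotpDl.
lra.
Qed.

Lemma prox_char z y : prox f lam z y <->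
  dom f y /\ forall y', dom f y' -> gr y - lam^-1 * dotp z y <= gr y' - lam^-1 * dotp z y'.
Proof.
split.
  move=> h.
  have dy : dom f y.
    have [x1 hx1] := fprop.2.
    have := h x1; rewrite (finE hx1) -EFinD /dom /=.
    have := f_ninf y; case: (f y) => //= r _ _; exact: ltry.
  split => // y' dy'.
  have := h y'; rewrite (finE dy) (finE dy') -!EFinD lee_fin !penE /gr; lra.
move=> [dy h] y'.
have [dy'|ndy] := pselect (dom f y'); last by rewrite (ndom ndy) leey.
have := h y' dy'; rewrite (finE dy) (finE dy') -!EFinD lee_fin !penE /gr; lra.
Qed.

Lemma psub_frechet x v : prox_subdiff f lam x v -> frechet_subdiff f x v.
Proof.
move=> [dx h]; split; first by rewrite (finE dx).
move=> eps e0; exists (2 * lam * eps); first by rewrite !mulr_gt0.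
move=> y hy; apply: le_trans (h y); rewrite (finE dx) -EFinD lee_fin /Ff.
have := pen_le e0 hy; lra.
Qed.

Lemma fin_dom (phi : V -> \bar R) x : phi x \is a fin_num -> dom phi x.
Proof. by rewrite fin_numElt => /andP [_ h]. Qed.

Lemma frechet_fg x v : frechet_subdiff f x v ->
  frechet_subdiff (add_j f lam) x (v + lam^-1 *: x).
Proof.
move=> [xfin h]; have dx := fin_dom xfin.
split; first by rewrite gE.
move=> eps e0; have [d d0 hd] := h eps e0; exists d => // y hy.
have := hd y hy.
have [dy|ndy] := pselect (dom f y); last by move=> _; rewrite /add_j (ndom ndy) /= leey.
move=> H; rewrite (gE dx) (gE dy) /= lee_fin; move: H; rewrite (finE dy) lee_fin.
rewrite /gr /Ff (Jdiff x y) dotpDl.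
have := pen_ge0 x y; lra.
Qed.

Lemma lim_fg x v : lim_subdiff f x v ->
  lim_subdiff (add_j f lam) x (v + lam^-1 *: x).
Proof.
move=> [xfin [xs [vs [cx [cf [fr cv]]]]]].
have dx := fin_dom xfin.
split; first by rewrite gE.
exists xs, (fun k => vs k + lam^-1 *: xs k); split => //.
split; last first.
  split; first by move=> k; exact: frechet_fg.
  by apply: vcvg_add => //; exact: vcvg_scale.
have dk : forall k, dom f (xs k) by move=> k; have [hh _] := fr k; exact: fin_dom hh.
have -> : (fun k => fine (add_j f lam (xs k))) =
          (fun k => Ff (xs k) + (lam^-1 / 2) * dotp (xs k) (xs k)).
  apply: funext => k; rewrite (gE (dk k)) /= /gr /Jf /jfun /sqn; congr (_ + _); ring.
have -> : fine (add_j f lam x) = Ff x + (lam^-1 / 2) * dotp x x.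
  by rewrite (gE dx) /= /gr /Jf /jfun /sqn; congr (_ + _); ring.
apply: rcvg_add => //; apply: rcvg_scale; exact: rcvg_dotp.
Qed.

Lemma lim_to_psub x v : convex_fun (add_j f lam) -> lim_subdiff f x v ->
  prox_subdiff f lam x v.
Proof.
move=> cg hl.
have hg := lim_fg hl.
have dx : dom f x by case: hl => h _; exact: fin_dom.
have := lim_convex cg g_ninf hg => hy.
apply/psub_gsub; split => // y dy.
by have := hy y; rewrite (gE dx) (gE dy) -EFinD lee_fin.
Qed.

Lemma psub_lim x v : prox_subdiff f lam x v -> lim_subdiff f x v.
Proof. by move=> h; apply: frechet_lim; exact: psub_frechet. Qed.

Definition cond_a := forall x, dom f x -> prox_subdiff f lam x !=set0.

Lemma a_convex : cond_a -> convex_set (dom f) -> convex_fun (add_j f lam).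
Proof.
move=> ha cd x y t /dom_g dx /dom_g dy /andP [t0 t1].
set z := t *: x + (1 - t) *: y.
have dz : dom f z by apply: cd => //; rewrite t0 t1.
have [v /psub_gsub [_ hv]] := ha z dz.
set w := v + lam^-1 *: z in hv.
have h1 := hv x dx; have h2 := hv y dy.
rewrite (gE dx) (gE dy) (gE dz) -!EFinM -EFinD lee_fin.
have e : t * dotp w (x - z) + (1 - t) * dotp w (y - z) = 0.
  rewrite -!dotpZr -dotpDr.
  have -> : t *: (x - z) + (1 - t) *: (y - z) = 0.
    rewrite !scalerBr addrACA -opprD -scalerDl (addrC t) subrK scale1r.
    by rewrite subrr.
  by rewrite dotp0r.
nra.
Qed.

Lemma sdom_lim_f : cond_a -> sdom (lim_subdiff f) = dom f.
Proof.
move=> ha; apply/seteqP; split => x.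
  by move=> [v [h _]]; exact: fin_dom.
by move=> dx; have [v hv] := ha x dx; exists v; exact: psub_lim.
Qed.

End Spec.

End P5.
Import P5.

Module P6.
Import ring lra.
Set Implicit Arguments. Unset Strict Implicit. Unset Printing Implicit Defensive.
Import Order.TTheory GRing.Theory Num.Theory.
Local Open Scope classical_set_scope.
Local Open Scope ring_scope.

Section Conv.
Variables (R : realType) (n : nat) (phi : 'rV[R]_n -> \bar R).
Local Notation V := 'rV[R]_n.
Hypothesis phi_ninf : forall y, phi y != -oo%E.

Definition cval m (w : 'I_m -> R) (p : 'I_m -> V) :=
  (\sum_(i < m) (w i)%:E * phi (p i))%E.

Lemma term_ninf (w : R) y : 0 <= w -> (w%:E * phi y)%E != -oo%E.
Proof.
move=> w0; have := phi_ninf y; case: (phi y) => [r| |] //= _.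
rewrite mulry; have [->|wn0] := eqVneq w 0; first by rewrite sgr0 mul0e.
by rewrite gtr0_sg ?mul1e // lt_def wn0 w0.
Qed.

Lemma term_pinf (w : R) y : 0 < w -> (w%:E * phi y < +oo)%E -> dom phi y.
Proof.
move=> w0; rewrite /dom /=; case: (phi y) => [r _|h|//]; first exact: ltry.
by move: h; rewrite mulry gtr0_sg // mul1e ltxx.
Qed.

Lemma termE (w : R) y : (w != 0 -> dom phi y) ->
  (w%:E * phi y)%E = (w * fine (phi y))%:E.
Proof.
have [->|wn0 /(_ isT)] := eqVneq w 0; first by rewrite mul0e mul0r.
rewrite /dom /=; have := phi_ninf y; case: (phi y) => [r| |] //=.
Qed.

Lemma sum_ninf m (P : pred 'I_m) (F : 'I_m -> \bar R) : (forall i, F i != -oo%E) ->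
  (\sum_(i < m | P i) F i)%E != -oo%E.
Proof.
move=> h; elim/big_ind: _ => // x y hx hy.
by rewrite adde_eq_ninfty negb_or hx hy.
Qed.

Lemma sum_pinf m (F : 'I_m -> \bar R) : (forall i, F i != -oo%E) ->
  ((\sum_(i < m) F i)%E < +oo)%E -> forall i, (F i < +oo)%E.
Proof.
move=> h hs i; rewrite ltNge leye_eq; apply/negP => /eqP Fi.
move: hs; rewrite (bigD1 i) //= Fi addye ?ltxx //.
exact: sum_ninf.
Qed.

Lemma combo_fin m (w : 'I_m -> R) (p : 'I_m -> V) :
  (forall i, 0 <= w i) -> (cval w p < +oo)%E ->
  (forall i, w i != 0 -> dom phi (p i)) /\
  cval w p = (\sum_(i < m) w i * fine (phi (p i)))%:E.
Proof.
move=> w0 hs.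
have hi := sum_pinf (fun i => term_ninf (p i) (w0 i)) hs.
have hd : forall i, w i != 0 -> dom phi (p i).
  move=> i wn0; have := hi i; apply: term_pinf.
  by rewrite lt_def wn0 w0.
split => //; rewrite /cval -sumEFin; apply: eq_bigr => i _; exact: termE (hd i).
Qed.

Lemma conv_le m (w : 'I_m -> R) (p : 'I_m -> V) x :
  convcomb w p x -> (conv_fun phi x <= cval w p)%E.
Proof. by move=> h; apply: ereal_inf_lbound; exists m, w, p. Qed.

Lemma conv_le_self x : (conv_fun phi x <= phi x)%E.
Proof.
apply: le_trans (conv_le (convcomb1 x)) _.
by rewrite /cval big_ord1 mul1e.
Qed.

Lemma conv_aff (c : R) (a : V) :
  (forall p, dom phi p -> c + dotp a p <= fine (phi p)) ->
  forall y, ((c + dotp a y)%:E <= conv_fun phi y)%E.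
Proof.
move=> h y; apply: le_ereal_inf_tmp => _ [m [w [p [hc ->]]]].
change ((c + dotp a y)%:E <= cval w p)%E.
have [->|hlt] := eqVneq (cval w p) +oo%E; first by rewrite leey.
have hlt' : (cval w p < +oo)%E by rewrite ltNge leye_eq.
have [hd ->] := combo_fin hc.1 hlt'.
rewrite lee_fin (dotpC a y) (convcomb_dotp _ hc) -(convcomb_const c hc) -big_split /=.
apply: ler_sum => i _; rewrite -mulrDr.
have [->|wn0] := eqVneq (w i) 0; first by rewrite !mul0r.
by rewrite ler_wpM2l ?(hc.1 i) // dotpC; apply: h; exact: hd.
Qed.

Lemma conv_approx x (c : R) : (conv_fun phi x < c%:E)%E ->
  exists m (w : 'I_m -> R) (p : 'I_m -> V), convcomb w p x /\
    (forall i, w i != 0 -> dom phi (p i)) /\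
    \sum_(i < m) w i * fine (phi (p i)) < c.
Proof.
move=> /ereal_inf_lt [_ [m [w [p [hc ->]]]] hlt].
have hlt' : (cval w p < +oo)%E by apply: lt_trans hlt _; rewrite ltry.
have [hd hE] := combo_fin hc.1 hlt'.
exists m, w, p; split => //; split => //.
by move: hlt; rewrite /cval in hE; rewrite hE lte_fin.
Qed.

Lemma ereal_le_eps (z : \bar R) (b : R) :
  (forall e, 0 < e -> (z <= (b + e)%:E)%E) -> (z <= b%:E)%E.
Proof.
case: z => [r| |] h; last by rewrite leNye.
- by rewrite lee_fin; apply: le_eps => e e0; have := h e e0; rewrite lee_fin.
- by have := h 1 ltr01; rewrite leye_eq.
Qed.

Hypothesis conv_ninf : forall y, conv_fun phi y != -oo%E.

Lemma conv_convex : convex_fun (conv_fun phi).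
Proof.
move=> x1 x2 t d1 d2 /andP [t0 t1].
have f1 : conv_fun phi x1 \is a fin_num by rewrite fin_numE conv_ninf; rewrite /dom /= in d1; rewrite lt_eqF.
have f2 : conv_fun phi x2 \is a fin_num by rewrite fin_numE conv_ninf; rewrite /dom /= in d2; rewrite lt_eqF.
rewrite -(fineK f1) -(fineK f2) -!EFinM -EFinD.
set C1 := fine _; set C2 := fine _.
apply: ereal_le_eps => e e0.
have [m1 [w1 [p1 [c1 [h1 s1]]]]] := @conv_approx x1 (C1 + e) (ltac:(by rewrite /C1 EFinD fineK // lteDl // lte_fin)).
have [m2 [w2 [p2 [c2 [h2 s2]]]]] := @conv_approx x2 (C2 + e) (ltac:(by rewrite /C2 EFinD fineK // lteDl // lte_fin)).
pose W (i : 'I_(m1 + m2)) := match fintype.split i with inl j => t * w1 j | inr j => (1 - t) * w2 j end.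
pose P (i : 'I_(m1 + m2)) := match fintype.split i with inl j => p1 j | inr j => p2 j end.
have Wl j : W (lshift m2 j) = t * w1 j by rewrite /W (unsplitK (inl j : 'I_m1 + 'I_m2)).
have Wr j : W (rshift m1 j) = (1 - t) * w2 j by rewrite /W (unsplitK (inr j : 'I_m1 + 'I_m2)).
have Pl j : P (lshift m2 j) = p1 j by rewrite /P (unsplitK (inl j : 'I_m1 + 'I_m2)).
have Pr j : P (rshift m1 j) = p2 j by rewrite /P (unsplitK (inr j : 'I_m1 + 'I_m2)).
have t1' : 0 <= 1 - t by lra.
have hc : convcomb W P (t *: x1 + (1 - t) *: x2).
  split.
    move=> i; rewrite /W; case: (fintype.split i) => j.
      by apply: mulr_ge0 => //; exact: c1.1.
    by apply: mulr_ge0 => //; exact: c2.1.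
  split.
    rewrite big_split_ord /=.
    under eq_bigr do rewrite Wl.
    under [X in _ + X = _]eq_bigr do rewrite Wr.
    by rewrite -!mulr_sumr c1.2.1 c2.2.1; lra.
  rewrite big_split_ord /=.
  under eq_bigr do rewrite Wl Pl.
  under [X in _ = _ + X]eq_bigr do rewrite Wr Pr.
  rewrite c1.2.2 c2.2.2 !scaler_sumr.
  by congr (_ + _); apply: eq_bigr => i _; rewrite scalerA.
apply: le_trans (conv_le hc) _.
have -> : cval W P = (t * \sum_(i < m1) w1 i * fine (phi (p1 i)) +
                     (1 - t) * \sum_(i < m2) w2 i * fine (phi (p2 i)))%:E.
  rewrite /cval big_split_ord /=.
  under eq_bigr do rewrite Wl Pl.
  under [X in (_ + X)%E = _]eq_bigr do rewrite Wr Pr.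
  rewrite !mulr_sumr EFinD -!sumEFin; congr (_ + _)%E; apply: eq_bigr => i _.
    rewrite termE; first by rewrite mulrA.
    by rewrite mulf_eq0 negb_or => /andP [_ hw]; exact: h1 hw.
  rewrite termE; first by rewrite mulrA.
  by rewrite mulf_eq0 negb_or => /andP [_ hw]; exact: h2 hw.
rewrite lee_fin.
have : t * \sum_(i < m1) w1 i * fine (phi (p1 i)) <= t * (C1 + e).
  by rewrite ler_wpM2l // ltW.
have : (1 - t) * \sum_(i < m2) w2 i * fine (phi (p2 i)) <= (1 - t) * (C2 + e).
  by rewrite ler_wpM2l // ltW.
lra.
Qed.

End Conv.

End P6.
Import P6.

Module P7.
Import ring lra.
Set Implicit Arguments. Unset Strict Implicit. Unset Printing Implicit Defensive.
Import Order.TTheory GRing.Theory Num.Theory.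
Local Open Scope classical_set_scope.
Local Open Scope ring_scope.

Section Main1.
Variables (R : realType) (n : nat) (f : 'rV[R]_n -> \bar R) (lam : R).
Local Notation V := 'rV[R]_n.
Hypothesis fprop : proper_fun f.
Hypothesis flsc : lsc f.
Hypothesis lam0 : 0 < lam.
Hypothesis hbound : (lam%:E < prox_threshold f)%E.
Hypothesis cdom : convex_set (dom f).

Local Notation g := (add_j f lam).
Local Notation gr := (gr f lam).
Local Notation Jf := (@P5.Jf R n lam).

Lemma dg y : dom g y <-> dom f y. Proof. exact: dom_g. Qed.
Lemma gE' y : dom f y -> g y = (gr y)%:E. Proof. exact: gE. Qed.
Lemma gni y : g y != -oo%E. Proof. exact: g_ninf. Qed.
Lemma pc z y : prox f lam z y <->
  dom f y /\ forall y', dom f y' -> gr y - lam^-1 * dotp z y <= gr y' - lam^-1 * dotp z y'.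
Proof. exact: prox_char. Qed.
Lemma pg x v : prox_subdiff f lam x v <-> gsub f lam x (v + lam^-1 *: x).
Proof. exact: psub_gsub. Qed.

Lemma rcont_ext (r s : V -> R) : (forall y, r y = s y) -> rcont s -> rcont r.
Proof. by move=> e; have -> : r = s by apply: funext. Qed.

Lemma rcont_Jf : rcont Jf.
Proof.
apply: (@rcont_ext _ (fun y => (lam^-1 / 2) * sqn y)); last exact: rcont_scale (@rcont_sqn _ _).
by move=> y; unfold P5.Jf, jfun; ring.
Qed.

Lemma rcont_lin (a : V) (c : R) : rcont (fun y => c * dotp a y).
Proof. by apply: rcont_scale; exact: rcont_dotp. Qed.

Lemma rcont_Jlin (a : V) : rcont (fun y => Jf y - dotp a y).
Proof.
apply: (@rcont_ext _ (fun y => Jf y + (-1) * dotp a y)); first by move=> y; rewrite mulN1r.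
by apply: rcont_add; [exact: rcont_Jf|exact: rcont_lin].
Qed.

Lemma rcont_pen (z : V) : rcont (fun y => Jf y + pen lam z y).
Proof.
apply: (@rcont_ext _ (fun y => (Jf y + Jf y) + ((- lam^-1) * dotp z y + Jf z))).
  by move=> y; rewrite (penE lam0); ring.
apply: rcont_add; first by apply: rcont_add; exact: rcont_Jf.
by apply: rcont_add; [exact: rcont_lin|exact: rcont_const].
Qed.

Lemma rcont_sqnB (x : V) : rcont (fun y => sqn (y - x)).
Proof.
apply: (@rcont_ext _ (fun y => sqn y + ((-2) * dotp x y + sqn x))).
  by move=> y; rewrite sqnB (dotpC y x); ring.
apply: rcont_add; first exact: rcont_sqn.
by apply: rcont_add; [exact: rcont_lin|exact: rcont_const].
Qed.

Lemma prox_lb : exists mu, lam < mu /\ exists x0 (beta : R),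
  forall y, (beta%:E <= f y + (pen mu x0 y)%:E)%E.
Proof.
have [_ [mu [mu0 [x0 hm]]] <-] := ereal_sup_gt hbound.
rewrite lte_fin => lmu; exists mu; split => //; exists x0.
have lb : forall y, (moreau f mu x0 <= f y + (pen mu x0 y)%:E)%E.
  by move=> y; apply: ereal_inf_lbound; exists y.
move: hm lb; case: (moreau f mu x0) => [r| |] // _ lb.
  by exists r.
by exists 0 => y; have := lb y; rewrite leye_eq => /eqP ->; rewrite leey.
Qed.

Lemma COER (a : V) : exists c : R, 0 < c /\ exists C : R,
  forall y, ((c * sqn y - C)%:E <= f y + (Jf y - dotp a y)%:E)%E.
Proof.
have [mu [lmu [x0 [beta hb]]]] := prox_lb.
have mu0 : 0 < mu by exact: lt_trans lam0 lmu.
have li : mu^-1 < lam^-1 by rewrite ltf_pV2 ?posrE.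
set c := (lam^-1 - mu^-1) / 4.
have c0 : 0 < c by rewrite divr_gt0 // subr_gt0.
set b := mu^-1 *: x0 - a.
exists c; split => //.
exists (- beta + mu^-1 * sqn x0 / 2 + sqn b / (4 * c)) => y.
have [dy|ndy] := pselect (dom f y); last first.
  by rewrite (ndom fprop ndy) /= leey.
have := hb y; rewrite (finE fprop dy) -!EFinD !lee_fin => h.
have hl := dotp_lb y b c0.
have e : Ff f y + (Jf y - dotp a y) =
  (Ff f y + pen mu x0 y - beta) + (beta - mu^-1 * sqn x0 / 2) + 2 * c * sqn y + dotp y b.
  rewrite /pen /P5.Jf /jfun /b /c dotpBr dotpZr sqnB (dotpC y a) (dotpC y x0).
  by field; rewrite !gt_eqF.
rewrite e; lra.
Qed.

Lemma g_lb : exists K : R, forall p, dom g p -> - K <= fine (g p).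
Proof.
have [c [c0 [C hC]]] := COER 0.
exists C => p /(dg) dp; rewrite (gE' dp) /=.
have := hC p; rewrite (finE fprop dp) dotp0l subr0 -EFinD lee_fin.
have := sqn_ge0 p; rewrite /P5.gr; nra.
Qed.

Lemma C_ninf y : conv_fun g y != -oo%E.
Proof.
have [K hK] := g_lb.
have := @conv_aff _ _ g gni (- K) 0 (fun p hp => ltac:(by rewrite dotp0l addr0; exact: hK)) y.
by case: (conv_fun g y).
Qed.

Lemma sdom_conv_sub : sdom (lim_subdiff (conv_fun g)) `<=` dom f.
Proof.
move=> x [v [xfin _]].
have [m [w [p [hc [hd _]]]]] := @conv_approx _ _ g gni x (fine (conv_fun g x) + 1)
  (ltac:(by rewrite EFinD fineK // lteDl // lte_fin)).
have [x1 hx1] := fprop.2.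
pose p' i := if w i == 0 then x1 else p i.
apply: (convex_combo cdom (w := w) (p := p')).
  split; first exact: hc.1; split; first exact: hc.2.1.
  rewrite hc.2.2; apply: eq_bigr => i _; rewrite /p'.
  by case: eqP => // ->; rewrite !scale0r.
move=> i; rewrite /p'; case: eqP => // /eqP wn0.
by apply/(dg); exact: hd.
Qed.

Lemma convcomb_affine m (w : 'I_m -> R) (p : 'I_m -> V) x c a :
  convcomb w p x -> \sum_(i < m) w i * (c + dotp (p i) a) = c + dotp x a.
Proof.
move=> hc; under eq_bigr do rewrite mulrDr.
by rewrite big_split /= -mulr_suml hc.2.1 mul1r (convcomb_dotp _ hc).
Qed.

Lemma convcomb_le m (w : 'I_m -> R) (p : 'I_m -> V) x (F G : 'I_m -> R) :
  convcomb w p x -> (forall i, F i <= G i) ->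
  \sum_(i < m) w i * F i <= \sum_(i < m) w i * G i.
Proof. by move=> hc h; apply: ler_sum => i _; rewrite ler_wpM2l // hc.1. Qed.

Definition cond_b := (forall x, prox f lam x = conv_set (prox f lam x)) /\
           sdom (lim_subdiff (conv_fun g)) = dom f.

Lemma a_b : cond_a f lam -> cond_b.
Proof.
move=> ha; split.
  move=> z; apply/seteqP; split => y.
    move=> hy; exists 1%N, (fun=> 1), (fun=> y); split => //; exact: convcomb1.
  move=> [m [w [p [hc hp]]]].
  have dp : forall i, dom f (p i) by move=> i; have [] := (pc z (p i)).1 (hp i).
  have dy : dom f y by apply: (convex_combo cdom hc).
  have [v /pg [_ hv]] := ha y dy.
  set wv := v + lam^-1 *: y in hv.
  apply/(pc); split => // y' dy'.
  set c := gr y - dotp y wv.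
  set a := wv - lam^-1 *: z.
  have e1 : gr y - lam^-1 * dotp z y = c + dotp y a.
    by rewrite /c /a dotpBr dotpZr (dotpC z y); ring.
  rewrite e1 -(convcomb_affine c a hc).
  have e2 : gr y' - lam^-1 * dotp z y' = \sum_(i < m) w i * (gr y' - lam^-1 * dotp z y').
    by rewrite (convcomb_const _ hc).
  rewrite e2; apply: convcomb_le hc _ => i.
  have [_ hpi] := (pc z (p i)).1 (hp i).
  apply: le_trans (hpi y' dy').
  have := hv (p i) (dp i).
  rewrite /c /a !dotpBr dotpZr (dotpC z (p i)) (dotpC wv (p i)) (dotpC wv y); lra.
apply/seteqP; split; first exact: sdom_conv_sub.
move=> x dx.
have [v /pg [_ hv]] := ha x dx.
set w := v + lam^-1 *: x in hv.
exists w.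
have low := @conv_aff _ _ g gni (gr x - dotp w x) w
  (fun p hp => ltac:(rewrite (gE' ((dg p).1 hp)) /=;
     have := hv p ((dg p).1 hp); rewrite dotpBr; lra)).
have up := @conv_le_self _ _ g x.
have eC : conv_fun g x = (gr x)%:E.
  apply/eqP; rewrite eq_le; rewrite (gE' dx) in up; rewrite up /=.
  by have := low x; rewrite subrK.
apply: frechet_lim; apply: global_frechet; first by rewrite eC.
move=> y; rewrite eC -EFinD; apply: le_trans (low y).
by rewrite lee_fin dotpBr; lra.
Qed.

Lemma P_mono : monotone_op (prox f lam).
Proof.
move=> x y u v hu hv.
have [du hu'] := (pc x u).1 hu.
have [dv hv'] := (pc y v).1 hv.
have h1 := hu' v dv; have h2 := hv' u du.
have : lam^-1 * dotp (u - v) (x - y) >= 0.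
  move: h1 h2; rewrite !dotpBl !dotpBr (dotpC u x) (dotpC v x) (dotpC u y) (dotpC v y).
  lra.
by rewrite pmulr_rge0 // invr_gt0.
Qed.

Lemma mono_conv z y u v m (w : 'I_m -> R) (q : 'I_m -> V) :
  convcomb w q u -> (forall i, prox f lam z (q i)) -> prox f lam y v ->
  0 <= dotp (u - v) (z - y).
Proof.
move=> hc hq hv.
rewrite dotpBl -(addrC (- dotp v (z - y))) -(convcomb_affine _ _ hc).
apply: sumr_ge0 => i _; apply: mulr_ge0; first exact: hc.1.
by rewrite addrC -dotpBl; apply: P_mono.
Qed.

Lemma c_b1 : max_monotone (prox f lam) ->
  forall x, prox f lam x = conv_set (prox f lam x).
Proof.
move=> [_ hmax] z.
pose T' := fun y => [set u | prox f lam y u \/ (y = z /\ conv_set (prox f lam z) u)].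
have mT : monotone_op T'.
  move=> x y u v [hu|[-> [m [w [q [hc hq]]]]]] [hv|[-> [m' [w' [q' [hc' hq']]]]]].
  - exact: P_mono.
  - have := mono_conv hc' hq' hu.
    by rewrite -opprB dotpNl -(opprB x) dotpNr opprK.
  - exact: mono_conv hc hq hv.
  - by rewrite subrr dotp0r.
have eT := hmax T' mT (fun x u hu => or_introl hu).
apply/seteqP; split => u hu.
  by exists 1%N, (fun=> 1), (fun=> u); split => //; exact: convcomb1.
by rewrite -eT; right.
Qed.

End Main1.

End P7.
Import P7.

Module P8.
Import ring lra.
Set Implicit Arguments. Unset Strict Implicit. Unset Printing Implicit Defensive.
Import Order.TTheory GRing.Theory Num.Theory.
Local Open Scope classical_set_scope.
Local Open Scope ring_scope.

Section Main2.
Variables (R : realType) (n : nat) (f : 'rV[R]_n -> \bar R) (lam : R).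
Local Notation V := 'rV[R]_n.
Hypothesis fprop : proper_fun f.
Hypothesis flsc : lsc f.
Hypothesis lam0 : 0 < lam.
Hypothesis hbound : (lam%:E < prox_threshold f)%E.
Hypothesis cdom : convex_set (dom f).

Local Notation g := (add_j f lam).
Local Notation gr := (gr f lam).
Local Notation Jf := (@P5.Jf R n lam).

Lemma dg' y : dom g y <-> dom f y. Proof. exact: dom_g. Qed.
Lemma gE2 y : dom f y -> g y = (gr y)%:E. Proof. exact: gE. Qed.
Lemma pc' z y : prox f lam z y <->
  dom f y /\ forall y', dom f y' -> gr y - lam^-1 * dotp z y <= gr y' - lam^-1 * dotp z y'.
Proof. exact: prox_char. Qed.

Lemma conv_real (x y : V) (t : R) : convex_fun g -> dom f x -> dom f y -> 0 <= t <= 1 ->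
  gr (t *: x + (1 - t) *: y) <= t * gr x + (1 - t) * gr y.
Proof.
move=> cg dx dy ht.
have dz : dom f (t *: x + (1 - t) *: y) by apply: cdom.
have := cg x y t ((dg' x).2 dx) ((dg' y).2 dy) ht.
by rewrite (gE2 dx) (gE2 dy) (gE2 dz) -!EFinM -EFinD lee_fin.
Qed.

Lemma a_c : cond_a f lam -> max_monotone (prox f lam).
Proof.
move=> ha; split; first exact: P_mono.
have cg := a_convex fprop lam0 ha cdom.
move=> T' mT hsub; apply: funext => x; apply/seteqP; split => u; last exact: hsub x u.
move=> hu.
set wv := x + u.
pose k := fun y => (f y + (Jf y + pen lam wv y)%:E)%E.
have [c [c0 [C hC]]] := COER fprop lam0 hbound 0.
have [x1 hx1] := fprop.2.
have [q hq] : exists q, forall y, (k q <= k y)%E.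
  apply: MinEx.
  - exact: lsc_addr flsc (rcont_pen lam0 wv).
  - by exists x1; rewrite /k (finE fprop hx1) -EFinD ltry.
  - exists c; split => //; exists C => y; apply: le_trans (hC y) _.
    by apply: leeD2l; rewrite lee_fin dotp0l subr0 lerDl pen_ge0.
have dq : dom f q.
  have := hq x1; rewrite /k (finE fprop hx1) -EFinD /dom /=.
  have := f_ninf fprop q; case: (f q) => //= r _ _; exact: ltry.
have kE : forall y, dom f y -> k y = (gr y + pen lam wv y)%:E.
  by move=> y dy; rewrite /k (finE fprop dy) -EFinD /P5.gr addrA.
have hp : prox f lam (wv - q) q.
  apply/pc'; split => // q' dq'.
  rewrite -subr_le0.
  apply: (@le_small_t _ _ (lam^-1 * sqn (q' - q) / 2)) => t t0 t1.
  set zt := t *: q' + (1 - t) *: q.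
  have ht : 0 <= t <= 1 by rewrite t1 ltW.
  have dz : dom f zt by apply: cdom.
  have h1 := hq zt; rewrite (kE _ dq) (kE _ dz) lee_fin in h1.
  have h2 := conv_real cg dq' dq ht.
  have e3 : zt - wv = (q - wv) + t *: (q' - q).
    by apply/rowP => i; rewrite !mxE; ring.
  have h3 : pen lam wv zt = pen lam wv q + t * (lam^-1 * dotp (q - wv) (q' - q)) +
                            t ^+ 2 * (lam^-1 * sqn (q' - q) / 2).
    rewrite /pen e3 sqnD sqnZ dotpZr; field; by rewrite gt_eqF.
  have e4 : lam^-1 * dotp (wv - q) q' - lam^-1 * dotp (wv - q) q =
            - (lam^-1 * dotp (q - wv) (q' - q)).
    by rewrite -mulrBr -dotpBr -mulrN -dotpNl opprB.
  rewrite h3 in h1.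
  set D := lam^-1 * dotp (q - wv) (q' - q) in h1 e4.
  set b := lam^-1 * sqn (q' - q) / 2 in h1 *.
  have : 0 <= t * (gr q' - gr q + D + t * b) by nra.
  rewrite pmulr_rge0 //; lra.
have hT := hsub _ _ hp.
have := mT x (wv - q) u q hu hT.
have -> : x - (wv - q) = - (u - q) by rewrite /wv; apply/rowP => i; rewrite !mxE; ring.
rewrite dotpNr => h.
have hs : sqn (u - q) = 0 by have := sqn_ge0 (u - q); rewrite /sqn in h *; lra.
have uq : u = q by apply/eqP; rewrite -subr_eq0; apply/eqP; exact: sqn_eq0.
have e : wv - q = x by rewrite /wv uq addrK.
by rewrite -e uq.
Qed.

End Main2.

End P8.
Import P8.

Module P9.
Import ring lra.
Set Implicit Arguments. Unset Strict Implicit. Unset Printing Implicit Defensive.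
Import Order.TTheory GRing.Theory Num.Theory.
Local Open Scope classical_set_scope.
Local Open Scope ring_scope.

Section Main3.
Variables (R : realType) (n : nat) (f : 'rV[R]_n -> \bar R) (lam : R).
Local Notation V := 'rV[R]_n.
Hypothesis fprop : proper_fun f.
Hypothesis flsc : lsc f.
Hypothesis lam0 : 0 < lam.
Hypothesis hbound : (lam%:E < prox_threshold f)%E.
Hypothesis cdom : convex_set (dom f).

Local Notation g := (add_j f lam).
Local Notation gr := (gr f lam).
Local Notation Jf := (@P5.Jf R n lam).

Lemma dg3 y : dom g y <-> dom f y. Proof. exact: dom_g. Qed.
Lemma gE3 y : dom f y -> g y = (gr y)%:E. Proof. exact: gE. Qed.
Lemma pc3 z y : prox f lam z y <->
  dom f y /\ forall y', dom f y' -> gr y - lam^-1 * dotp z y <= gr y' - lam^-1 * dotp z y'.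
Proof. exact: prox_char. Qed.

Lemma two_combo (S : set V) : (conv_set S `<=` S) -> convex_set S.
Proof.
move=> hS p q t Sp Sq /andP [t0 t1]; apply: hS.
exists 2%N, (fun i : 'I_2 => if i == ord0 then t else 1 - t),
  (fun i : 'I_2 => if i == ord0 then p else q); split; last by move=> i; case: ifP.
split; first by move=> i; case: ifP => _ //; lra.
by rewrite !big_ord_recl !big_ord0 /=; split; [lra| rewrite addr0].
Qed.

Lemma b_a : cond_b f lam -> cond_a f lam.
Proof.
move=> [hprox hsd] x dx.
have [w hw] : sdom (lim_subdiff (conv_fun g)) x by rewrite hsd.
set C := conv_fun g.
have Cninf : forall y, C y != -oo%E := C_ninf fprop lam0 hbound.
have cC : convex_fun C := conv_convex (g_ninf lam fprop) Cninf.
have hC := lim_convex cC Cninf hw.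
have Cfin : C x \is a fin_num by case: hw.
set c0 := fine (C x).
have CxE : C x = c0%:E by rewrite fineK.
have Cle : forall y, dom f y -> c0 + dotp w (y - x) <= gr y.
  move=> y dy; have := le_trans (hC y) (conv_le_self g y).
  by rewrite CxE (gE3 dy) -EFinD lee_fin.
set h := fun y => gr y - dotp w y.
set m0 := c0 - dotp w x.
have hm0 : forall y, dom f y -> m0 <= h y.
  by move=> y dy; have := Cle y dy; rewrite /h /m0 dotpBr; lra.
suff hx : h x <= m0.
  exists (w - lam^-1 *: x); apply/(psub_gsub fprop lam0); rewrite subrK.
  split => // y dy; have := Cle y dy; move: hx; rewrite /h /m0; lra.
rewrite leNgt; apply/negP => hlt.
pose Hf := fun y => (f y + (Jf y - dotp w y)%:E)%E.
have lscH : lsc Hf := lsc_addr flsc (rcont_Jlin lam w).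
have HfE : forall y, dom f y -> Hf y = (h y)%:E.
  by move=> y dy; rewrite /Hf (finE fprop dy) -EFinD /h /P5.gr addrA.
have Hnd : forall y, ~ dom f y -> Hf y = +oo%E.
  by move=> y ndy; rewrite /Hf (ndom fprop ndy).
have Hdom : forall y, (Hf y < +oo)%E -> dom f y.
  move=> y; have [//|ndy] := pselect (dom f y); by rewrite Hnd.
have [cw [cw0 [Cw hCw]]] := COER fprop lam0 hbound w.
have [q0 hq0] : exists q0, forall y, (Hf q0 <= Hf y)%E.
  apply: MinEx => //; first by exists x; rewrite HfE // ltry.
  by exists cw; split => //; exists Cw.
have dq0 : dom f q0 by apply: Hdom; apply: le_lt_trans (hq0 x) _; rewrite HfE // ltry.
have hq0m : h q0 <= m0.
  have := @conv_aff _ _ g (g_ninf lam fprop) (h q0) w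
    (fun p hp => ltac:(have dp := (dg3 p).1 hp; rewrite (gE3 dp) /=;
       have := hq0 p; rewrite (HfE _ dq0) (HfE _ dp) lee_fin /h; lra)) x.
  by rewrite -/C CxE lee_fin /m0; lra.
pose Pset := fun y => (Hf y <= m0%:E)%E.
have PsetE : forall y, Pset y <-> dom f y /\ h y <= m0.
  move=> y; split.
    move=> hy; have dy : dom f y by apply: Hdom; apply: le_lt_trans hy _; exact: ltry.
    by split => //; move: hy; rewrite /Pset HfE // lee_fin.
  by move=> [dy hy]; rewrite /Pset HfE // lee_fin.
have Pprox : forall y, Pset y <-> prox f lam (lam *: w) y.
  move=> y; rewrite PsetE pc3.
  have e : forall y', gr y' - lam^-1 * dotp (lam *: w) y' = h y'.
    by move=> y'; rewrite dotpZl mulrA mulVf ?gt_eqF // mul1r.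
  split.
    move=> [dy hy]; split => // y' dy'; rewrite !e; apply: le_trans hy _; exact: hm0.
  move=> [dy hy]; split => //; have := hy q0 dq0; rewrite !e => hh; exact: le_trans hh hq0m.
have Pcvx : convex_set Pset.
  apply: two_combo => y hy; apply/Pprox; rewrite hprox.
  case: hy => m [ww [pp [hc hp]]]; exists m, ww, pp; split => // i.
  by apply/Pprox.
have Pq0 : Pset q0 by apply/PsetE; split.
have Px : ~ Pset x by move=> /PsetE [_ hh]; move: hlt; rewrite ltNge hh.
pose psi := fun y => if `[< Pset y >] then (sqn (y - x))%:E else +oo%E.
have [p hp] : exists p, forall y, (psi p <= psi y)%E.
  apply: MinEx.
  - apply: lsc_restr; first exact: lsc_EFin (rcont_sqnB x).
    exact: closed_sublevel lscH.
  - by exists q0; rewrite /psi; case: asboolP => // _; rewrite ltry.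
  - exists (1/2); split; first lra.
    exists (sqn x) => y; rewrite /psi; case: asboolP => _; last by rewrite leey.
    rewrite lee_fin sqnB.
    have := dotp_lb y (- x) (ltac:(lra) : 0 < 1/4).
    rewrite dotpNr sqnN; move=> hl.
    have e : sqn x / (4 * (1 / 4)) = sqn x by field.
    rewrite e in hl; lra.
have psiE : forall y, Pset y -> psi y = (sqn (y - x))%:E.
  by move=> y hy; rewrite /psi; case: asboolP.
have Pp : Pset p.
  have := hp q0; rewrite (psiE q0 Pq0) /psi; case: (asboolP (Pset p)) => // _; rewrite leye_eq.
have var : forall q, Pset q -> dotp (x - p) (q - p) <= 0.
  move=> q Pq.
  apply: (@le_small_t _ _ (sqn (q - p) / 2)) => t t0 t1.
  have Pz : Pset (t *: q + (1 - t) *: p) by apply: Pcvx => //; rewrite t1 ltW.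
  have := hp (t *: q + (1 - t) *: p); rewrite !psiE // lee_fin.
  have -> : t *: q + (1 - t) *: p - x = (p - x) + t *: (q - p).
    by apply/rowP => i; rewrite !mxE; ring.
  rewrite (sqnD (p - x)) sqnZ dotpZr.
  have -> : dotp (x - p) (q - p) = - dotp (p - x) (q - p).
    by rewrite -dotpNl opprB.
  nra.
set u := x - p.
set ga := dotp u x - sqn u / 2.
have hPu : forall q, Pset q -> dotp u q <= dotp u x - sqn u.
  move=> q Pq; have := var q Pq; rewrite -/u dotpBr.
  have e : sqn u = dotp u x - dotp u p by rewrite /sqn -dotpBr.
  lra.
have su0 : 0 <= sqn u := sqn_ge0 u.
have u0 : sqn u = 0 -> False.
  move=> su; have u0' : u = 0 := sqn_eq0 su.
  have xp : x = p by apply/eqP; rewrite -subr_eq0 -/u u0'.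
  by apply: Px; rewrite xp.
have hux : ga <= dotp u x by rewrite /ga; lra.
pose phi2 := fun y => if `[< ga <= dotp u y >] then Hf y else +oo%E.
have phi2x : phi2 x = (h x)%:E.
  by rewrite /phi2; case: (asboolP (ga <= dotp u x)) => // _; rewrite HfE.
have [y2 hy2] : exists y2, forall y, (phi2 y2 <= phi2 y)%E.
  apply: MinEx.
  - by apply: lsc_restr; [exact: lscH|exact: closed_halfspace].
  - by exists x; rewrite phi2x ltry.
  - exists cw; split => //; exists Cw => y; rewrite /phi2; case: asboolP => _.
      exact: hCw.
    exact: leey.
have [H2 d2] : ga <= dotp u y2 /\ dom f y2.
  have := hy2 x; rewrite phi2x /phi2; case: (asboolP (ga <= dotp u y2)) => hg; last by rewrite leye_eq.
  move=> hh; split => //; apply: Hdom; apply: le_lt_trans hh _; exact: ltry.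
set eta := h y2 - m0.
have eta0 : 0 < eta.
  rewrite ltNge; apply/negP => hle.
  have Py2 : Pset y2 by apply/PsetE; split => //; rewrite /eta in hle; lra.
  have := hPu y2 Py2; rewrite /ga in H2 => hh.
  by apply: u0; lra.
have heta : forall y, dom f y -> ga <= dotp u y -> m0 + eta <= h y.
  move=> y dy hg; have := hy2 y; rewrite /phi2.
  case: (asboolP (ga <= dotp u y2)) => // _; case: (asboolP (ga <= dotp u y)) => // _.
  by rewrite (HfE _ d2) (HfE _ dy) lee_fin /eta; lra.
have [c1 [c10 [C1 hC1]]] := COER fprop lam0 hbound (w + u).
have hub : forall y, dom f y -> dotp u y <= h y + C1.
  move=> y dy; have := hC1 y; rewrite (finE fprop dy) -EFinD lee_fin dotpDl /h /P5.gr.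
  have := sqn_ge0 y; nra.
set L := `|ga| + `|C1 + m0|.
have L0 : 0 <= L by rewrite addr_ge0.
set K := L / eta + 1.
have Le : 0 <= L / eta by rewrite divr_ge0 // ltW.
have K0 : 0 < K by rewrite /K; lra.
have K1 : (K - 1) * eta = L by rewrite /K addrK mulfVK // gt_eqF.
have key : forall y, dom f y -> dotp u y <= ga + K * (h y - m0).
  move=> y dy; have hm := hm0 y dy.
  case: (lerP ga (dotp u y)) => hg.
    have he := heta y dy hg; have hb := hub y dy.
    have h1 : (K - 1) * eta <= (K - 1) * (h y - m0).
      by rewrite ler_wpM2l //; rewrite /K; lra.
    have h2 : m0 + C1 - ga <= L.
      have := ler_norm (- ga); rewrite normrN.
      have := ler_norm (C1 + m0); rewrite /L; lra.
    have h3 : K * (h y - m0) = (K - 1) * (h y - m0) + (h y - m0) by ring.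
    rewrite h3; lra.
  have : 0 <= K * (h y - m0) by apply: mulr_ge0; [exact: ltW|lra].
  lra.
have hK : forall p, dom g p -> m0 - K^-1 * ga + dotp (w + K^-1 *: u) p <= fine (g p).
  move=> q hq; have dq := (dg3 q).1 hq; rewrite (gE3 dq) /= dotpDl dotpZl.
  have kk := key q dq.
  have : K^-1 * dotp u q <= K^-1 * (ga + K * (h q - m0)).
    by rewrite ler_wpM2l // invr_ge0 ltW.
  rewrite mulrDr mulrA mulVf ?gt_eqF // mul1r /h => hh.
  lra.
have := @conv_aff _ _ g (g_ninf lam fprop) _ _ hK x.
rewrite -/C CxE lee_fin dotpDl dotpZl /m0 => hh.
have : 0 <= K^-1 * (ga - dotp u x) by rewrite mulrBr; lra.
rewrite pmulr_rge0 ?invr_gt0 // /ga => hh2.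
by apply: u0; lra.
Qed.

End Main3.

End P9.
Import P9.

Unset Implicit Arguments.

Theorem mainTheorem6 (R : realType) (n : nat) (f : 'rV[R]_n -> \bar R) (lam : R) :
  proper_fun f -> lsc f -> prox_bounded f ->
  (0%:E < prox_threshold f)%E ->
  0 < lam -> (lam%:E < prox_threshold f)%E ->
  convex_set (dom f) ->
  let a := forall x, dom f x -> prox_subdiff f lam x !=set0 in
  let b := (forall x, prox f lam x = conv_set (prox f lam x)) /\
           sdom (lim_subdiff (conv_fun (add_j f lam))) = dom f in
  let c := max_monotone (prox f lam) /\
           sdom (lim_subdiff (conv_fun (add_j f lam))) = dom f in
  let d := convex_fun (add_j f lam) /\ sdom (lim_subdiff f) = dom f in
  let e := (prox_subdiff f lam = lim_subdiff f) /\ sdom (lim_subdiff f) = dom f in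
  (a <-> b) /\ (a <-> c) /\ (a <-> d) /\ (a <-> e).
Proof.
move=> fprop flsc _ _ lam0 hb cd a b c d e.
have ab : a -> b := a_b fprop lam0 cd.
have ba : b -> a := b_a fprop flsc lam0 hb.
have ac : a -> c := fun ha => conj (a_c fprop flsc lam0 hb cd ha) (ab ha).2.
have ca : c -> a.
  by move=> [hm hs]; apply: ba; split => //; exact: (c_b1 fprop lam0 hm).
have ad : a -> d := fun ha => conj (a_convex fprop lam0 ha cd) (sdom_lim_f fprop lam0 ha).
have da : d -> a.
  move=> [cg hs] x dx.
  have [v hv] : sdom (lim_subdiff f) x by rewrite hs.
  by exists v; exact: (lim_to_psub fprop lam0 cg hv).
have ae : a -> e.
  move=> ha; split; last exact: (sdom_lim_f fprop lam0 ha).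
  apply: funext => x; apply/seteqP; split => v hv.
    exact: (psub_lim fprop lam0 hv).
  exact: (lim_to_psub fprop lam0 (a_convex fprop lam0 ha cd) hv).
have ea : e -> a.
  move=> [he hs] x dx.
  have [v hv] : sdom (lim_subdiff f) x by rewrite hs.
  by exists v; rewrite he.
exact: (conj (conj ab ba) (conj (conj ac ca) (conj (conj ad da) (conj ae ea)))).
Qed.
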